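(* Let $\mathbb{F}\in\{\mathbb{R},\mathbb{C}\}$, let $\Phi=\{\varphi_i\}_{i=1}^M$ be a Parseval frame for $\mathbb{F}^N$, and let $1\le k\leq N$. Then $${N\choose k}\leq V_k(\Phi)\leq\sqrt{{M\choose k}{N\choose k}},$$ with equality in the upper bound if and only if $v_k(\Phi_K)=c_{M,N,k}$ for every $K\subseteq[M]$ with $|K|=k$, where $c_{M,N,k}=\sqrt{{M\choose k}^{-1}{N\choose k}}$; and with equality in the lower bound if and only if there is a subset $J\subseteq[M]$ with $|J|=N$ such that $\{\varphi_i\}_{i\in J}$ is an orthonormal basis of $\mathbb{F}^N$ and $\varphi_i=0$ whenever $i\notin J$.
   Context: A Parseval frame for $\mathbb{F}^N$ is a family $\{\varphi_i\}_{i=1}^M\subseteq\mathbb{F}^N$ whose $N\times M$ matrix $\Phi$ (columns $\varphi_i$) satisfies $\Phi\Phi^*=I$. For $K\subseteq[M]$, $\Phi_K$ denotes the $N\times|K|$ submatrix of columns indexed by $K$. For an $N\times k$ matrix $F$ with $k\le N$, $v_k(F)=\sqrt{\det(F^*F)}$. The total $k$-dimensional volume is $V_k(\Phi)=\sum_{|K|=k}v_k(\Phi_K)$. *)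

(* Defs.v *)
From HB Require Import structures.
From mathcomp Require Import all_boot all_order all_algebra.
From mathcomp Require Import all_reals.
From mathcomp Require Export complex.
Set Implicit Arguments. Unset Strict Implicit. Unset Printing Implicit Defensive.
Import Order.TTheory GRing.Theory Num.Theory.
Local Open Scope ring_scope.

(* Frames are N x M matrices whose columns are the frame vectors phi_i.
   For a field F with an involution conjF (identity for F = R, complex
   conjugation for F = C) and a square root sqrtF on nonnegative reals. *)

Section FrameDefs.
Variables (F : numFieldType) (conjF : F -> F) (sqrtF : F -> F).

Definition adjmx m n (A : 'M[F]_(m, n)) : 'M[F]_(n, m) := (map_mx conjF A)^T.

Definition parseval N M (Phi : 'M[F]_(N, M)) : Prop := Phi *m adjmx Phi = 1%:M.

Definition subcols N M (Phi : 'M[F]_(N, M)) (K : {set 'I_M}) : 'M[F]_(N, #|K|) :=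
  colsub (fun j : 'I_#|K| => enum_val j) Phi.

Definition vol N k (A : 'M[F]_(N, k)) : F := sqrtF (\det (adjmx A *m A)).

Definition total_vol N M (Phi : 'M[F]_(N, M)) (k : nat) : F :=
  \sum_(K : {set 'I_M} | #|K| == k) vol (subcols Phi K).

Definition is_ONB N M (Phi : 'M[F]_(N, M)) (J : {set 'I_M}) : Prop :=
  adjmx (subcols Phi J) *m subcols Phi J = 1%:M /\ \rank (subcols Phi J) = N.

Definition prop8_statement : Prop :=
  forall (N M k : nat) (Phi : 'M[F]_(N, M)),
    parseval Phi -> (1 <= k <= N)%N ->
    let c := sqrtF ('C(M, k)%:R^-1 * 'C(N, k)%:R) in
    [/\ 'C(N, k)%:R <= total_vol Phi k,
        total_vol Phi k <= sqrtF ('C(M, k)%:R * 'C(N, k)%:R),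
        (total_vol Phi k = sqrtF ('C(M, k)%:R * 'C(N, k)%:R) <->
           forall K : {set 'I_M}, #|K| = k -> vol (subcols Phi K) = c) &
        (total_vol Phi k = 'C(N, k)%:R <->
           exists J : {set 'I_M}, [/\ #|J| = N, is_ONB Phi J &
              forall i : 'I_M, i \notin J -> col i Phi = 0])].
End FrameDefs.

Definition complexC (R : realType) : numClosedFieldType := (R : rcfType)[i].

(* Main.v *)
Require Import Defs.
From HB Require Import structures.
From mathcomp Require Import all_boot all_order all_algebra.
From mathcomp Require Import all_reals.
From mathcomp Require Import complex.
From mathcomp Require Import all_fingroup.
From mathcomp Require Import ring.
Set Implicit Arguments. Unset Strict Implicit. Unset Printing Implicit Defensive.
Import Order.TTheory GRing.Theory Num.Theory.
Local Open Scope ring_scope.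

Section CB.
Variable R : comRingType.

Lemma CB1 k n (A : 'M[R]_(k,n)) (B : 'M[R]_(n,k)) :
  \det (A *m B) = \sum_(f : {ffun 'I_k -> 'I_n}) (\prod_i A i (f i)) * \det (rowsub f B).
Proof.
rewrite /determinant.
transitivity (\sum_(s : 'S_k) \sum_(f : {ffun 'I_k -> 'I_n})
   (-1) ^+ s * ((\prod_i A i (f i)) * \prod_i B (f i) (s i))).
  apply: eq_bigr => s _; rewrite -big_distrr /=; congr (_ * _).
  transitivity (\prod_i \sum_j A i j * B j (s i)).
    by apply: eq_bigr => i _; rewrite mxE.
  rewrite bigA_distr_bigA; apply: eq_bigr => f _; by rewrite big_split.
rewrite exchange_big; apply: eq_bigr => f _; rewrite big_distrr /=.
apply: eq_bigr => s _; rewrite mulrCA; congr (_ * (_ * _)).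
by apply: eq_bigr => i _; rewrite mxE.
Qed.

Lemma det_rowsub_perm k n (g : 'I_k -> 'I_n) (s : 'S_k) (B : 'M[R]_(n,k)) :
  \det (rowsub (fun i => g (s i)) B) = (-1) ^+ s * \det (rowsub g B).
Proof.
have -> : rowsub (fun i => g (s i)) B = row_perm s (rowsub g B).
  by apply/matrixP => i j; rewrite !mxE.
by rewrite row_permE det_mulmx det_perm.
Qed.

Lemma det_colsub_perm k n (g : 'I_k -> 'I_n) (s : 'S_k) (A : 'M[R]_(k,n)) :
  \det (colsub (fun i => g (s i)) A) = (-1) ^+ s * \det (colsub g A).
Proof.
have -> : colsub (fun i => g (s i)) A = col_perm s (colsub g A).
  by apply/matrixP => i j; rewrite !mxE.
by rewrite col_permE det_mulmx det_perm odd_permV mulrC.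
Qed.

Lemma CB k n (A : 'M[R]_(k,n)) (B : 'M[R]_(n,k)) :
  k`!%:R * \det (A *m B) =
  \sum_(h : {ffun 'I_k -> 'I_n}) \det (colsub h A) * \det (rowsub h B).
Proof.
transitivity (\sum_(s : 'S_k) \sum_(h : {ffun 'I_k -> 'I_n})
   (-1) ^+ s * (\prod_i A i (h (s i))) * \det (rowsub h B)); last first.
  rewrite exchange_big; apply: eq_bigr => h _.
  rewrite [X in _ = X * _]/determinant big_distrl /=.
  apply: eq_bigr => s _; congr (_ * _ * _).
  by apply: eq_bigr => i _; rewrite mxE.
rewrite -card_Sn mulr_natl -sumr_const; apply: eq_bigr => s _.
rewrite CB1 (reindex_inj (h := fun g : {ffun 'I_k -> 'I_n} => [ffun i => g (s i)])); last first.
  move=> g1 g2 /ffunP E; apply/ffunP => i; have := E ((s^-1)%g i).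
  by rewrite !ffunE permKV.
apply: eq_bigr => g _.
have -> : rowsub [ffun i => g (s i)] B = rowsub (fun i => g (s i)) B.
  by apply/matrixP => i j; rewrite !mxE ffunE.
rewrite det_rowsub_perm.
have -> : \prod_i A i ([ffun i0 => g (s i0)] i) = \prod_i A i (g (s i)).
  by apply: eq_bigr => i _; rewrite ffunE.
by rewrite mulrCA mulrA.
Qed.
End CB.


Section Gen.
Variables (F : numFieldType) (c : {rmorphism F -> F}) (sqrtF : F -> F).
Hypothesis cK : involutive c.
Hypothesis cN : forall x : F, x * c x = `|x| ^+ 2.

Lemma adjE m n (A : 'M[F]_(m,n)) i j : adjmx c A i j = c (A j i).
Proof. by rewrite /adjmx !mxE. Qed.

Lemma adjM m n p (A : 'M[F]_(m,n)) (B : 'M[F]_(n,p)) :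
  adjmx c (A *m B) = adjmx c B *m adjmx c A.
Proof.
apply/matrixP => i j; rewrite adjE !mxE rmorph_sum; apply: eq_bigr => l _.
by rewrite !adjE rmorphM mulrC.
Qed.

Lemma adjK m n (A : 'M[F]_(m,n)) : adjmx c (adjmx c A) = A.
Proof. by apply/matrixP => i j; rewrite !adjE cK. Qed.

Lemma adj1 n : adjmx c (1%:M : 'M[F]_n) = 1%:M.
Proof. by apply/matrixP => i j; rewrite adjE !mxE eq_sym; case: (_ == _); rewrite ?rmorph1 ?rmorph0. Qed.

Lemma det_adj n (A : 'M[F]_n) : \det (adjmx c A) = c (\det A).
Proof. by rewrite /adjmx det_tr det_map_mx. Qed.

Lemma adj_colsub m n k (f : 'I_k -> 'I_n) (A : 'M[F]_(m,n)) :
  adjmx c (colsub f A) = rowsub f (adjmx c A).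
Proof. by apply/matrixP => i j; rewrite !(adjE, mxE). Qed.

Lemma adj_rowsub m n k (f : 'I_k -> 'I_m) (A : 'M[F]_(m,n)) :
  adjmx c (rowsub f A) = colsub f (adjmx c A).
Proof. by apply/matrixP => i j; rewrite !(adjE, mxE). Qed.

Lemma cnorm x : c x * x = `|x| ^+ 2.
Proof. by rewrite mulrC cN. Qed.

Lemma c_nneg x : 0 <= x -> c x = x.
Proof.
move=> x0.
Abort.

Variables (N M k : nat) (Phi : 'M[F]_(N,M)).
Hypothesis hP : Phi *m adjmx c Phi = 1%:M.

Definition P := adjmx c Phi *m Phi.
Definition Gf (f : 'I_k -> 'I_M) : 'M[F]_k := adjmx c (colsub f Phi) *m colsub f Phi.
Definition d f := \det (Gf f).
Definition Q (h f : 'I_k -> 'I_M) := \det (rowsub h (colsub f P)).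

Lemma adjP : adjmx c P = P.
Proof. by rewrite /P adjM adjK. Qed.

Lemma PP : P *m P = P.
Proof. by rewrite /P mulmxA -(mulmxA _ Phi) hP mulmx1. Qed.

Lemma GfE f : Gf f = rowsub f (colsub f P).
Proof. by apply/matrixP => i j; rewrite !mxE; apply: eq_bigr => l _; rewrite !(adjE, mxE). Qed.

Lemma dQ f : d f = Q f f.
Proof. by rewrite /d GfE. Qed.

Lemma Pii_ge0 i : 0 <= P i i.
Proof. by rewrite /P mxE sumr_ge0 // => j _; rewrite adjE cnorm exprn_ge0. Qed.

Lemma K1 f : k`!%:R * d f = \sum_(h : {ffun 'I_k -> 'I_M}) `|Q h f| ^+ 2.
Proof.
have -> : d f = \det (adjmx c (colsub f P) *m colsub f P).
  rewrite dQ /Q; congr (\det _); rewrite -{1}PP -{1}adjP.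
  by apply/matrixP => i j; rewrite !mxE; apply: eq_bigr => l _; rewrite !(adjE, mxE).
rewrite CB; apply: eq_bigr => h _.
by rewrite -adj_rowsub det_adj cnorm.
Qed.

Lemma Q_noninj h f i j : i != j -> h i = h j -> Q h f = 0.
Proof.
move=> ij hij; rewrite /Q (determinant_alternate ij) // => l.
by rewrite !mxE hij.
Qed.

Lemma d_noninj f : ~~ injectiveb f -> d f = 0.
Proof.
by case/injectivePn => i [j ij fij]; rewrite dQ (Q_noninj _ ij fij).
Qed.

Lemma Q_perm h f (s : 'S_k) : Q (fun i => h (s i)) f = (-1) ^+ s * Q h f.
Proof. by rewrite /Q det_rowsub_perm. Qed.

Lemma Q_permr h f (s : 'S_k) : Q h (fun i => f (s i)) = (-1) ^+ s * Q h f.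
Proof.
rewrite /Q; have -> : rowsub h (colsub (fun i => f (s i)) P) = colsub s (rowsub h (colsub f P)).
  by apply/matrixP => i j; rewrite !mxE.
have := det_colsub_perm id s (rowsub h (colsub f P)).
have -> : colsub id (rowsub h (colsub f P)) = rowsub h (colsub f P).
  by apply/matrixP => i j; rewrite !mxE.
by [].
Qed.

Lemma d_perm f (s : 'S_k) : d (fun i => f (s i)) = d f.
Proof.
by rewrite !dQ Q_perm Q_permr mulrA -signr_addb addbb expr0 mul1r.
Qed.

Lemma Q_ext h h' f : h =1 h' -> Q h f = Q h' f.
Proof. by move=> E; rewrite /Q; congr (\det _); apply/matrixP => i j; rewrite !mxE E. Qed.

Lemma d_ext f f' : f =1 f' -> d f = d f'.
Proof.
move=> E; rewrite !dQ /Q; congr (\det _); apply/matrixP => i j; rewrite !mxE !E.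
by [].
Qed.

Lemma d_ge0 f : 0 <= d f.
Proof.
have := K1 f; have kp : 0 < k`!%:R :> F by rewrite ltr0n fact_gt0.
move=> E; rewrite -(pmulr_rge0 _ kp) E; apply: sumr_ge0 => h _.
exact: exprn_ge0.
Qed.

Definition T (f : 'I_k -> 'I_M) : {set {ffun 'I_k -> 'I_M}} :=
  [set [ffun i => f (s i)] | s : 'S_k].

Lemma K_core f : injective f ->
  k`!%:R * d f = k`!%:R * d f ^+ 2 + \sum_(h | h \notin T f) `|Q h f| ^+ 2.
Proof.
move=> fi; rewrite K1 (bigID (fun h => h \in T f)) /=; congr (_ + _).
rewrite /T big_imset /=; last first.
  move=> s1 s2 _ _ /ffunP E; apply/permP => i; apply: fi; have := E i.
  by rewrite !ffunE.
rewrite -card_Sn mulr_natl -sumr_const; apply: eq_bigr => s _.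
rewrite (@Q_ext _ (fun i => f (s i))); last by move=> i; rewrite ffunE.
by rewrite Q_perm normrM normr_sign mul1r -dQ ger0_norm // d_ge0.
Qed.

Lemma d_le1 f : d f <= 1.
Proof.
have [fi|nfi] := boolP (injectiveb f); last by rewrite d_noninj // ler01.
have /injectiveP fi' := fi.
have kp : 0 < k`!%:R :> F by rewrite ltr0n fact_gt0.
have H : d f ^+ 2 <= d f.
  rewrite -(ler_pM2l kp) (K_core fi') lerDl; apply: sumr_ge0 => h _.
  exact: exprn_ge0.
have := d_ge0 f; rewrite le0r => /orP [/eqP ->|dp]; first by rewrite ler01.
by rewrite -(ler_pM2l dp) mulr1 -expr2.
Qed.

Lemma d1_inj f : d f = 1 -> injective f.
Proof.
move=> d1; have [/injectiveP //|nfi] := boolP (injectiveb f).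
by move: d1; rewrite d_noninj // => /eqP; rewrite eq_sym oner_eq0.
Qed.

Lemma K6 f h : d f = 1 -> h \notin T f -> Q h f = 0.
Proof.
move=> d1 hT; have fi := d1_inj d1.
have := K_core fi; rewrite d1 expr1n mulr1 -{1}(addr0 (k`!%:R)) => /addrI /esym E.
have := psumr_eq0P (fun (h : {ffun 'I_k -> 'I_M}) _ => exprn_ge0 2 (normr_ge0 (Q h f))) E hT.
by move/eqP; rewrite expf_eq0 /= normr_eq0 => /eqP.
Qed.

Lemma cramer_row n (G : 'M[F]_n) (y : 'rV[F]_n) : \det G != 0 ->
  (forall a, \det (\matrix_(i, b) if i == a then y 0 b else G i b) = 0) -> y = 0.
Proof.
move=> dG H.
have E : y *m \adj G = 0.
  apply/rowP => a; rewrite mxE [RHS]mxE.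
  transitivity (\det (\matrix_(i, b) if i == a then y 0 b else G i b)); last exact: H.
  rewrite (expand_det_row _ a); apply: eq_bigr => b _.
  rewrite !mxE eqxx; congr (_ * _).
  rewrite /cofactor; congr (_ * \det _); apply/matrixP => i j; rewrite !mxE.
  by rewrite eq_sym (negbTE (neq_lift a i)).
have : y *m (\adj G *m G) = 0 by rewrite mulmxA E mul0mx.
by rewrite mul_adj_mx mul_mx_scalar => /eqP; rewrite scaler_eq0 (negbTE dG) /= => /eqP.
Qed.

Lemma K7 f j b : d f = 1 -> (forall i, f i != j) -> P j (f b) = 0.
Proof.
move=> d1 fj; have fi := d1_inj d1.
pose y := \row_b P j (f b).
suff : y = 0 by move/rowP/(_ b); rewrite !mxE.
apply: (@cramer_row _ (Gf f)); first by rewrite -/(d f) d1 oner_eq0.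
move=> a; pose h := [ffun i => if i == a then j else f i].
have : Q h f = 0.
  apply: K6 => //; apply/imsetP => [[s _ /ffunP E]]; have := E a.
  rewrite !ffunE eqxx => ja; have := fj (s a); by rewrite -ja eqxx.
rewrite /Q => <-; congr (\det _); apply/matrixP => i b'; rewrite !mxE ffunE.
case: (i == a) => //; apply: eq_bigr => l _; by rewrite !(adjE, mxE).
Qed.

Lemma K8 f a b : d f = 1 -> P (f a) (f b) = (a == b)%:R.
Proof.
move=> d1; have fi := d1_inj d1.
have GG : adjmx c (Gf f) *m Gf f = Gf f.
  apply/matrixP => a' b'.
  have -> : Gf f a' b' = P (f a') (f b') by rewrite GfE !mxE.
  rewrite -{1}PP -{1}adjP !mxE.
  rewrite (bigID (fun j => j \in [set f i | i : 'I_k])) /= [X in _ = _ + X]big1; last first.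
    move=> j jI; apply/eqP; rewrite mulf_eq0; apply/orP; right; apply/eqP.
    apply: K7 => // i; apply: contra jI => /eqP <-; exact: imset_f.
  rewrite addr0 big_imset /=; last by move=> x y _ _; exact: fi.
  apply: eq_big => // i _.
  by rewrite !adjE GfE !mxE.
have uG : Gf f \in unitmx by rewrite unitmxE -/(d f) d1 unitr1.
have A1 : adjmx c (Gf f) = 1%:M.
  by rewrite -(mulmxK uG (adjmx c (Gf f))) GG mulmxV.
have G1 : Gf f = 1%:M by rewrite -(adjK (Gf f)) A1 adj1.
have := congr1 (fun X : 'M[F]_k => X a b) G1; rewrite GfE !mxE.
by [].
Qed.

Lemma sum_d : \sum_(f : {ffun 'I_k -> 'I_M}) d f = ('C(N,k) * k`!)%:R.
Proof.
have kp : k`!%:R != 0 :> F by rewrite pnatr_eq0 -lt0n fact_gt0.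
apply: (mulfI kp); rewrite mulr_sumr.
pose m (h : 'I_k -> 'I_N) (f : 'I_k -> 'I_M) := \det (rowsub h (colsub f Phi)).
transitivity (\sum_(f : {ffun 'I_k -> 'I_M}) \sum_(h : {ffun 'I_k -> 'I_N}) m h f * c (m h f)).
  apply: eq_bigr => f _; rewrite /d /Gf CB; apply: eq_bigr => h _.
  by rewrite -adj_rowsub det_adj mulrC.
rewrite exchange_big /=.
transitivity (\sum_(h : {ffun 'I_k -> 'I_N}) k`!%:R * (injectiveb h)%:R :> F).
  apply: eq_bigr => h _.
  have E1 : rowsub h Phi *m adjmx c (rowsub h Phi) = rowsub h (colsub h 1%:M).
    rewrite -hP; apply/matrixP => a b; rewrite !mxE; apply: eq_bigr => l _.
    by rewrite !(adjE, mxE).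
  have E2 : \det (rowsub h (colsub h (1%:M : 'M[F]_N))) = (injectiveb h)%:R.
    have [hi|nhi] := boolP (injectiveb h).
      have -> : rowsub h (colsub h (1%:M : 'M[F]_N)) = 1%:M.
        apply/matrixP => a b; rewrite !mxE; have /injectiveP hi' := hi.
        by rewrite (inj_eq hi').
      by rewrite det1.
    case/injectivePn: nhi => a [b ab hab].
    by rewrite (determinant_alternate ab) // => l; rewrite !mxE hab.
  rewrite -E2 -E1 CB; apply: eq_bigr => f _.
  rewrite -adj_colsub det_adj; congr (_ * c _); rewrite /m; congr (\det _).
    by apply/matrixP => a b; rewrite !mxE.
  by apply/matrixP => a b; rewrite !mxE.
rewrite -mulr_sumr; congr (_ * _).
have Ecard : #|[set f : {ffun 'I_k -> 'I_N} | injectiveb f]| = ('C(N,k) * k`!)%N.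
  by rewrite card_inj_ffuns !card_ord bin_ffact.
rewrite -Ecard -sumr_const.
transitivity (\sum_(h : {ffun 'I_k -> 'I_N}) (if h \in [set f : {ffun 'I_k -> 'I_N} | injectiveb f] then 1 else 0) : F).
  by apply: eq_bigr => h _; rewrite inE; case: (injectiveb h).
by rewrite -big_mkcond.
Qed.

End Gen.


Lemma same_image_perm k n (f g : 'I_k -> 'I_n) : injective f -> injective g ->
  [set f i | i : 'I_k] = [set g i | i : 'I_k] -> exists s : 'S_k, forall i, g i = f (s i).
Proof.
move=> fi gi E.
have H i : exists j, f j == g i.
  have : g i \in [set g i | i : 'I_k] by apply: imset_f.
  by rewrite -E => /imsetP [j _ ->]; exists j.
pose s0 i := xchoose (H i).
have s0E i : f (s0 i) = g i by apply/eqP/(xchooseP (H i)).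
have s0i : injective s0 by move=> i1 i2 e; apply: gi; rewrite -!s0E e.
by exists (perm s0i) => i; rewrite permE s0E.
Qed.

Lemma image_card k n (f : 'I_k -> 'I_n) : injective f -> #|[set f i | i : 'I_k]| = k.
Proof. by move=> fi; rewrite card_imset // card_ord. Qed.

Lemma bridge (F : numFieldType) k n (G : ('I_k -> 'I_n) -> F) (H : {set 'I_n} -> F) :
  (forall f, ~~ injectiveb f -> G f = 0) ->
  (forall (K : {set 'I_n}) (f : 'I_k -> 'I_n), #|K| = k -> injective f -> [set f i | i : 'I_k] = K -> G f = H K) ->
  \sum_(f : {ffun 'I_k -> 'I_n}) G f = k`!%:R * \sum_(K : {set 'I_n} | #|K| == k) H K.
Proof.
move=> G0 GH.
rewrite (bigID (fun f : {ffun 'I_k -> 'I_n} => injectiveb f)) /= [X in _ + X]big1; last first.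
  by move=> f /G0.
rewrite addr0 (partition_big (fun f : {ffun 'I_k -> 'I_n} => [set f i | i : 'I_k])
   (fun K : {set 'I_n} => #|K| == k)) /=; last first.
  by move=> f /injectiveP fi; rewrite image_card.
rewrite mulr_sumr; apply: eq_bigr => K /eqP cK.
transitivity (\sum_(f in [set f : {ffun 'I_k -> 'I_n} in ffun_on K | injectiveb f]) H K).
  apply: eq_big => f.
    rewrite inE; apply/andP/andP => [[fi /eqP fK]|[fon fi]]; split => //.
      by apply/ffun_onP => x; rewrite -fK; apply: imset_f.
    rewrite eqEcard; apply/andP; split.
      by apply/subsetP => y /imsetP [x _ ->]; apply: (ffun_onP fon x).
    by rewrite image_card ?cK //; apply/injectiveP.
  by move=> /andP [/injectiveP fi /eqP fK]; apply: GH.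
by rewrite sumr_const card_inj_ffuns_on cK card_ord ffactnn mulr_natl.
Qed.


Lemma det_cast (F : numFieldType) (cj : {rmorphism F -> F}) N M k n' (Phi : 'M[F]_(N,M))
   (e : n' = k) (g : 'I_n' -> 'I_M) :
  \det (adjmx cj (colsub g Phi) *m colsub g Phi) =
  d cj Phi (fun i : 'I_k => g (cast_ord (esym e) i)).
Proof.
subst n'; rewrite /d /Gf; congr (\det _); apply/matrixP => a b; rewrite !mxE.
apply: eq_bigr => j _; rewrite !(adjE, mxE).
have E x : cast_ord (esym (erefl k)) x = x by apply: val_inj.
by rewrite !E.
Qed.

Section Main.
Variables (F : numFieldType) (cj : {rmorphism F -> F}) (sqrtF : F -> F).
Hypothesis cK : involutive cj.
Hypothesis cN : forall x : F, x * cj x = `|x| ^+ 2.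
Hypothesis sqF : forall x, 0 <= x -> 0 <= sqrtF x /\ sqrtF x ^+ 2 = x.

Lemma sqrt_uniq (x y : F) : 0 <= x -> 0 <= y -> x ^+ 2 = y ^+ 2 -> x = y.
Proof. by move=> x0 y0 E; apply: (pexpIrn (n := 2)); rewrite ?nnegrE. Qed.

Lemma sqF0 : sqrtF 0 = 0.
Proof. have [h1 h2] := sqF (lexx 0); apply: sqrt_uniq => //; by rewrite h2 expr0n. Qed.

Lemma sqF1 : sqrtF 1 = 1.
Proof. have [h1 h2] := sqF ler01; apply: sqrt_uniq => //; by rewrite h2 expr1n. Qed.

Lemma sqrt_ge (x : F) : 0 <= x -> x <= 1 -> x <= sqrtF x.
Proof.
move=> x0 x1; have [s0 s2] := sqF x0.
have s1 : sqrtF x <= 1.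
  by rewrite -(ler_pXn2r (n := 2)) // ?s2 ?expr1n // nnegrE.
by rewrite -{1}s2 expr2 -[X in _ <= X]mulr1; apply: ler_wpM2l.
Qed.

Lemma sqrt_eq01 (x : F) : 0 <= x -> sqrtF x = x -> x = 0 \/ x = 1.
Proof.
move=> x0 E; have [_ s2] := sqF x0; move: s2; rewrite E => /eqP.
rewrite expr2 -{3}(mulr1 x) -subr_eq0 -mulrBr mulf_eq0 subr_eq0.
by case/orP => /eqP ->; [left|right].
Qed.

Variables (N M k : nat) (Phi : 'M[F]_(N,M)).
Hypothesis hP : Phi *m adjmx cj Phi = 1%:M.

Definition dK (K : {set 'I_M}) := \det (adjmx cj (subcols Phi K) *m subcols Phi K).

Lemma dK_eq (K : {set 'I_M}) (f : 'I_k -> 'I_M) : #|K| = k -> injective f -> [set f i | i : 'I_k] = K ->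
  d cj Phi f = dK K.
Proof.
move=> hK fi fK; rewrite /dK /subcols (det_cast _ _ hK).
set g := fun i => _.
have gi : injective g.
  by move=> x y; rewrite /g => /enum_val_inj /cast_ord_inj.
have gK : [set g i | i : 'I_k] = K.
  apply/eqP; rewrite eqEcard; apply/andP; split; last by rewrite image_card // hK.
  by apply/subsetP => y /imsetP [x _ ->]; rewrite /g enum_valP.
have [s Es] := same_image_perm gi fi (etrans gK (esym fK)).
by rewrite (d_ext _ _ Es) (d_perm cj Phi g s).
Qed.

Lemma sum_dK : \sum_(K : {set 'I_M} | #|K| == k) dK K = 'C(N,k)%:R.
Proof.
have := bridge (G := d cj Phi) (H := dK) (@d_noninj _ _ _ _ _ _) dK_eq.
rewrite sum_d // natrM mulrC => /(mulfI _) -> //.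
by rewrite pnatr_eq0 -lt0n fact_gt0.
Qed.

Lemma dK_ge0 (K : {set 'I_M}) : #|K| = k -> 0 <= dK K.
Proof.
move=> hK; pose g := fun i : 'I_k => enum_val (cast_ord (esym hK) i).
by rewrite /dK /subcols (det_cast _ _ hK) (d_ge0 cK cN).
Qed.

Lemma dK_le1 (K : {set 'I_M}) : #|K| = k -> dK K <= 1.
Proof.
move=> hK; by rewrite /dK /subcols (det_cast _ _ hK) (d_le1 cK cN hP).
Qed.

End Main.


Lemma cs_id (F : numFieldType) (I : finType) (Pr : pred I) (x : I -> F) :
  \sum_(i | Pr i) (#|Pr|%:R * x i - \sum_(j | Pr j) x j) ^+ 2 =
  #|Pr|%:R * (#|Pr|%:R * \sum_(i | Pr i) x i ^+ 2 - (\sum_(j | Pr j) x j) ^+ 2).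
Proof.
set n := #|Pr|%:R; set S := \sum_(j | Pr j) x j.
transitivity (\sum_(i | Pr i) (n ^+ 2 * x i ^+ 2 - (2 * n * S) * x i + S ^+ 2)).
  by apply: eq_bigr => i _; ring.
rewrite big_split /= sumrB -!mulr_sumr -/S.
have -> : \sum_(i | Pr i) S = S *+ #|Pr| by rewrite -sumr_const; apply: eq_bigl.
rewrite -mulr_natr -/n; ring.
Qed.

Lemma bin_strict u N k : (0 < k)%N -> (k <= N)%N -> (u < N)%N -> ('C(u,k) < 'C(N,k))%N.
Proof.
case: k => // k _; case: N => // N kN uN.
rewrite ltnS in uN; rewrite binS; apply: (leq_ltn_trans (leq_bin2l _ uN)).
by rewrite -[X in (X < _)%N]addn0 ltn_add2l bin_gt0.
Qed.

Lemma sqr_real_ge0 (F : numFieldType) (y : F) : y \is Num.real -> 0 <= y ^+ 2.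
Proof. by move=> yr; rewrite -real_normK // exprn_ge0. Qed.

Lemma main_gen (F : numFieldType) (cj : {rmorphism F -> F}) (sqrtF : F -> F) :
  involutive cj -> (forall x : F, x * cj x = `|x| ^+ 2) ->
  (forall x, 0 <= x -> 0 <= sqrtF x /\ sqrtF x ^+ 2 = x) ->
  prop8_statement cj sqrtF.
Proof.
move=> cK cN sqF N M k Phi hP /andP [k1 kN] c0.
rewrite /parseval in hP.
rewrite /total_vol /vol.
pose x := fun K => sqrtF (dK cj Phi K).
change (\sum_(K : {set 'I_M} | #|K| == k) sqrtF (\det (adjmx cj (subcols Phi K) *m subcols Phi K)))
  with (\sum_(K : {set 'I_M} | #|K| == k) x K).
pose Pr := fun K : {set 'I_M} => #|K| == k.
pose n := #|Pr|.
have nE : n = 'C(M,k).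
  have := card_draws 'I_M k; rewrite card_ord => <-; apply: eq_card => K; by rewrite inE.
pose B : F := 'C(N,k)%:R.
have sumB : \sum_(K | Pr K) dK cj Phi K = B by apply: sum_dK.
have xge0 K : Pr K -> 0 <= x K by move=> /eqP hK; case: (sqF _ (dK_ge0 cK cN hP hK)).
have x2 K : Pr K -> x K ^+ 2 = dK cj Phi K.
  by move=> /eqP hK; case: (sqF _ (dK_ge0 cK cN hP hK)).
have S2 : \sum_(K | Pr K) x K ^+ 2 = B by rewrite -sumB; apply: eq_bigr => K /x2.
set V := \sum_(K : {set 'I_M} | #|K| == k) x K.
have V0 : 0 <= V by apply: sumr_ge0 => K; apply: xge0.
have CS := cs_id Pr x; rewrite S2 -/V -/n in CS.
have sqnn K : Pr K -> 0 <= (n%:R * x K - V) ^+ 2.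
  move=> PK; apply: sqr_real_ge0; apply: rpredB; last exact: ger0_real.
  by apply: rpredM; [apply: realn | apply: ger0_real; apply: xge0].
have nB0 : 0 <= n%:R * B by apply: mulr_ge0; apply: ler0n.
have [s0 s2] := sqF _ nB0.
have Vle : V ^+ 2 <= n%:R * B.
  case: (posnP n) => [n0|npos].
    have -> : V = 0.
      by rewrite /V big_pred0 // => K; have := card0_eq n0 K; rewrite !inE.
    by rewrite expr0n /= n0 mul0r.
  have np : 0 < n%:R :> F by rewrite ltr0n.
  rewrite -subr_ge0 -(pmulr_rge0 _ np) -CS.
  by apply: sumr_ge0 => K; apply: sqnn.
split.
-
  rewrite -/B -sumB; apply: ler_sum => K PK.
  by apply: (sqrt_ge sqF); [apply: (dK_ge0 cK cN hP) | apply: (dK_le1 cK cN hP)]; apply/eqP.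
-
  rewrite -nE -/B -(ler_pXn2r (n := 2)) ?nnegrE // s2.
  exact: Vle.
-
  rewrite -nE -/B; split.
  + move=> Veq K hK; rewrite /c0 -nE -/B.
    have PK : Pr K by apply/eqP.
    have npos : (0 < n)%N by apply/card_gt0P; exists K.
    have np : n%:R != 0 :> F by rewrite pnatr_eq0 -lt0n.
    have V2 : V ^+ 2 = n%:R * B by rewrite Veq s2.
    have E0 : \sum_(i | Pr i) (n%:R * x i - V) ^+ 2 = 0 by rewrite CS V2 subrr mulr0.
    have := psumr_eq0P sqnn E0 PK => /eqP; rewrite expf_eq0 /= subr_eq0 => /eqP nxV.
    have nB'0 : 0 <= n%:R^-1 * B by apply: mulr_ge0; rewrite ?invr_ge0 ler0n.
    have [c00 c02] := sqF _ nB'0.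
    apply: sqrt_uniq => //; first exact: xge0.
    rewrite c02; apply: (mulfI np); rewrite mulVKf //.
    apply: (mulfI np); rewrite -V2 -nxV.
rewrite /x; ring.
  + move=> H.
    have VE : V = c0 *+ n.
      rewrite /V -sumr_const; apply: eq_big => // K /eqP hK; exact: H.
    apply: sqrt_uniq => //; rewrite s2 VE.
    case: (posnP n) => [->|npos]; first by rewrite !mulr0n mul0r expr0n.
    have np : n%:R != 0 :> F by rewrite pnatr_eq0 -lt0n.
    have nB'0 : 0 <= n%:R^-1 * B by apply: mulr_ge0; rewrite ?invr_ge0 ler0n.
    have [c00 c02] := sqF _ nB'0.
    have c0E : c0 ^+ 2 = n%:R^-1 * B by rewrite /c0 -nE.
    rewrite -[c0 *+ n]mulr_natr exprMn c0E; field.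
    by [].
-
  rewrite -/B; split.
  + move=> Veq.
    have hx K : Pr K -> x K = dK cj Phi K.
      move=> PK; apply/eqP; rewrite -subr_eq0; apply/eqP.
      have E0 : \sum_(K | Pr K) (x K - dK cj Phi K) = 0 by rewrite sumrB -/V Veq sumB subrr.
      apply: (psumr_eq0P _ E0 PK) => K' /eqP hK'; rewrite subr_ge0.
      by apply: (sqrt_ge sqF); [apply: (dK_ge0 cK cN hP) | apply: (dK_le1 cK cN hP)].
    have hd01 (f : 'I_k -> 'I_M) : d cj Phi f = 0 \/ d cj Phi f = 1.
      case: (boolP (injectiveb f)) => [/injectiveP fi|nfi]; last by left; apply: d_noninj.
      have hK := image_card fi.
      rewrite (dK_eq _ _ hK fi erefl); apply: (sqrt_eq01 sqF).
        exact: (dK_ge0 cK cN hP hK).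
      by apply: hx; apply/eqP.
    pose U := [set i : 'I_M | [exists f : {ffun 'I_k -> 'I_M},
                 (d cj Phi f == 1) && (i \in [set f j | j : 'I_k])]].
    have hU i : i \in U -> forall j, P cj Phi j i = (j == i)%:R.
      rewrite inE => /existsP [f /andP [/eqP d1 /imsetP [b _ ->]]] j.
      have fi := d1_inj d1.
      case: (boolP (j \in [set f a | a : 'I_k])) => [/imsetP [a _ ->]|jn].
        by rewrite (K8 cK cN hP a b d1) (inj_eq fi).
      rewrite (K7 cK cN hP b d1) => [|a]; last first.
        by apply: contra jn => /eqP <-; apply: imset_f.
      suff -> : (j == f b) = false by [].
      by apply/negbTE; apply: contra jn => /eqP ->; apply: imset_f.
    pose SU := [set f : {ffun 'I_k -> 'I_M} in ffun_on U | injectiveb f].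
    have cnt : ('C(N,k) * k`! <= #|U| ^_ k)%N.
      have E : #|SU| = #|U| ^_ k by rewrite card_inj_ffuns_on card_ord.
      rewrite -E -(ler_nat F) -(sum_d k hP) -sumr_const.
      rewrite [X in _ <= X]big_mkcond /=; apply: ler_sum => f _.
      case: (hd01 f) => d1; rewrite d1; first by case: ifP => _ //; apply: ler01.
      suff -> : f \in SU by [].
      rewrite inE; apply/andP; split; last by apply/injectiveP; apply: (d1_inj d1).
      apply/ffun_onP => y; rewrite inE; apply/existsP; exists f; rewrite d1 eqxx /=.
      by apply: imset_f.
    have NU : (N <= #|U|)%N.
      rewrite leqNgt; apply/negP => UN.
      have := bin_strict k1 kN UN.
      rewrite ltnNge => /negP; apply.
      by rewrite -(leq_pmul2r (fact_gt0 k)) !bin_ffact -bin_ffact.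
    have trP : \sum_i P cj Phi i i = N%:R.
      by rewrite -[LHS]/(\tr (P cj Phi)) /P mxtrace_mulC hP mxtrace1.
    rewrite (bigID (fun i => i \in U)) /= in trP.
    have EU : \sum_(i | i \in U) P cj Phi i i = #|U|%:R.
      rewrite -sumr_const; apply: eq_bigr => i iU; by rewrite (hU i iU) eqxx.
    rewrite EU in trP.
    set R0 := \sum_(i | i \notin U) _ in trP.
    have R0ge : 0 <= R0 by apply: sumr_ge0 => i _; apply: Pii_ge0.
    have R0le : R0 <= 0.
      have -> : R0 = N%:R - #|U|%:R by rewrite -trP [#|U|%:R + _]addrC addrK.
      by rewrite subr_le0 ler_nat.
    have R00 : R0 = 0 by apply/le_anti; rewrite R0le R0ge.
    have UN : #|U| = N.
      by apply/eqP; rewrite -(eqr_nat F) -trP R00 addr0.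
    have Pz i : i \notin U -> P cj Phi i i = 0.
      by move=> iU; apply: (psumr_eq0P _ R00) => // j _; apply: Pii_ge0.
    have ONB : adjmx cj (subcols Phi U) *m subcols Phi U = 1%:M.
      apply/matrixP => a b; rewrite !mxE.
      have := hU _ (enum_valP b) (enum_val a).
      rewrite (inj_eq enum_val_inj) /P !mxE => <-.
      by apply: eq_bigr => j _; rewrite !mxE.
    exists U; split => //.
    * split => //.
      apply/eqP; rewrite eqn_leq rank_leq_row /=.
      have := mxrankM_maxr (adjmx cj (subcols Phi U)) (subcols Phi U).
      by rewrite ONB mxrank1 => H; rewrite -[X in (X <= _)%N]UN.
    * move=> i iU; apply/matrixP => j z; rewrite !mxE.
      have := Pz i iU; rewrite /P mxE => H0.
      have H1 : \sum_j0 `|Phi j0 i| ^+ 2 = 0.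
        by rewrite -[RHS]H0; apply: eq_bigr => j' _; rewrite adjE mulrC cN.
      have := psumr_eq0P (fun j0 _ => exprn_ge0 2 (normr_ge0 (Phi j0 i))) H1 (isT : predT j).
      by move=> /(_ j) /eqP; rewrite expf_eq0 /= normr_eq0 => /eqP.
  + move=> [J [hJ [hO hr] hz]].
    have PJ y z : y \in J -> z \in J -> P cj Phi y z = (y == z)%:R.
      move=> yJ zJ.
      have := congr1 (fun X : 'M_#|J| => X (enum_rank_in yJ y) (enum_rank_in yJ z)) hO.
      rewrite !mxE -(inj_eq enum_val_inj) !enum_rankK_in // => <-.
      by apply: eq_bigr => j _; rewrite !adjE /subcols !mxE (enum_rankK_in yJ yJ) (enum_rankK_in yJ zJ).
    have hd01 (f : 'I_k -> 'I_M) : d cj Phi f = 0 \/ d cj Phi f = 1.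
      case: (boolP (injectiveb f)) => [/injectiveP fi|nfi]; last by left; apply: d_noninj.
      case: (boolP [forall a, f a \in J]) => [/forallP fJ|].
        right; rewrite /d.
        have -> : Gf cj Phi f = 1%:M.
          apply/matrixP => a b; rewrite GfE.
          transitivity (P cj Phi (f a) (f b)); first by rewrite !mxE.
          by rewrite PJ // (inj_eq fi) mxE.
        exact: det1.
      rewrite negb_forall => /existsP [a fa]; left.
      rewrite /d (expand_det_col _ a) big1 // => i _.
      rewrite !mxE big1 ?mul0r // => j _.
      have := congr1 (fun X : 'cV_N => X j 0) (hz _ fa); rewrite !mxE => ->.
      by rewrite mulr0.
    rewrite /V -sumB; apply: eq_bigr => K /eqP hK.
    rewrite /x; have : dK cj Phi K = 0 \/ dK cj Phi K = 1.
      by rewrite /dK /subcols (det_cast _ _ hK); apply: hd01.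
    by case => ->; rewrite ?(sqF0 sqF) ?(sqF1 sqF).
Qed.


Unset Implicit Arguments.

Theorem proposition8 (R : realType) :
  prop8_statement (@id R) (@Num.sqrt R) /\
  prop8_statement (fun z : complexC R => z^*)
    (sqrtC : complexC R -> complexC R).
Proof.
split.
- apply: (@main_gen R (idfun : {rmorphism R -> R}) (@Num.sqrt R)).
  + by [].
  + by move=> x; rewrite real_normK ?num_real // expr2.
  + by move=> x x0; rewrite sqrtr_ge0 sqr_sqrtr.
- apply: (@main_gen (complexC R) (Num.conj_op : {rmorphism complexC R -> complexC R}) sqrtC).
  + exact: conjCK.
  + by move=> x; rewrite normCK.
  + by move=> x x0; rewrite sqrtC_ge0 sqrtCK.
Qed.
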